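(* Let $k \ge 2$ and $v$ be integers with $v \equiv 2 \pmod{k-1}$ and $v \ge k(k-1)^2 + 2k$. Then \[ \frac{2v-4}{k-1} \le \beta(2,v,k) \le \frac{2v-4}{k-1} + k^2 - 2. \]
   Context: For integers $v \ge k \ge 2$, a $(v,k)$-packing is a pair $(X,\mathcal{B})$ where $X$ is a set of $v$ points and $\mathcal{B}$ is a set of $k$-subsets of $X$ (blocks) such that every pair of distinct points lies in at most one block. A partial parallel class (PPC) is a set of pairwise disjoint blocks; its size is the number of blocks. A PPC of size $\rho$ is maximum if the packing has no PPC of size $\rho+1$. $\beta(\rho,v,k)$ denotes the maximum number of blocks in a $(v,k)$-packing in which the maximum PPC has size $\rho$. *)

(* Defs.v *)
From mathcomp Require Import all_boot.
Set Implicit Arguments. Unset Strict Implicit. Unset Printing Implicit Defensive.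

Definition is_packing (v k : nat) (B : {set {set 'I_v}}) : bool :=
  [forall b in B, #|b| == k] &&
  [forall x : 'I_v, forall y : 'I_v,
     (x != y) ==> (#|[set b in B | (x \in b) && (y \in b)]| <= 1)].

Definition is_ppc (v : nat) (B P : {set {set 'I_v}}) : bool :=
  (P \subset B) &&
  [forall b1 in P, forall b2 in P, (b1 != b2) ==> [disjoint b1 & b2]].

Definition max_ppc_size (v : nat) (B : {set {set 'I_v}}) (rho : nat) : bool :=
  [exists P : {set {set 'I_v}}, is_ppc B P && (#|P| == rho)] &&
  ~~ [exists P : {set {set 'I_v}}, is_ppc B P && (#|P| == rho.+1)].

(* beta(rho, v, k): maximum number of blocks of a (v,k)-packing whose maximum
   PPC has size rho (0 if no such packing exists). *)
Definition beta (rho v k : nat) : nat :=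
  \max_(B : {set {set 'I_v}} | is_packing k B && max_ppc_size B rho) #|B|.

(* Main.v *)
Require Import Defs.
From mathcomp Require Import all_boot zify.
Set Implicit Arguments. Unset Strict Implicit. Unset Printing Implicit Defensive.

Lemma card_bigcup_le (T I : finType) (P : pred I) (A : I -> {set T}) :
  #|\bigcup_(i | P i) A i| <= \sum_(i | P i) #|A i|.
Proof.
elim/big_rec2: _ => [|i n X Pi h]; first by rewrite cards0.
apply: leq_trans (leq_card_setU _ _) _; exact: leq_add.
Qed.

Lemma le1_eq (T : finType) (S : {set T}) x y : #|S| <= 1 -> x \in S -> y \in S -> x = y.
Proof. by move=> /card_le1_eqP h hx hy; apply: h. Qed.

Lemma eq_le1 (T : finType) (S : {pred T}) : (forall x y, x \in S -> y \in S -> x = y) -> #|S| <= 1.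
Proof. by move=> h; apply/card_le1_eqP => x y hx hy; apply: h. Qed.


Lemma ndisjP (T : finType) (A C : {set T}) :
  reflect (exists2 x, x \in A & x \in C) (~~ [disjoint A & C]).
Proof.
rewrite -setI_eq0; apply: (iffP idP) => [/set0Pn [x]|[x xa xc]].
  by rewrite inE => /andP [? ?]; exists x.
by apply/set0Pn; exists x; rewrite inE xa xc.
Qed.

Section Upper.
Variables (v k : nat) (B : {set {set 'I_v}}).
Hypothesis Hk : 2 <= k.
Hypothesis HP : is_packing k B.
Hypothesis HN3 : forall b1 b2 b3, b1 \in B -> b2 \in B -> b3 \in B ->
  [disjoint b1 & b2] -> [disjoint b1 & b3] -> [disjoint b2 & b3] -> False.

Lemma card_blk b : b \in B -> #|b| = k.
Proof. by case/andP: HP => /forall_inP h _ /h /eqP. Qed.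

Lemma lin b1 b2 x y : b1 \in B -> b2 \in B -> x != y -> x \in b1 -> y \in b1 ->
  x \in b2 -> y \in b2 -> b1 = b2.
Proof.
move=> h1 h2 nxy x1 y1 x2 y2; case/andP: HP => _ /forallP /(_ x) /forallP /(_ y).
move/implyP/(_ nxy) => hle; apply: (le1_eq hle); by rewrite inE ?h1 ?h2 ?x1 ?y1 ?x2 ?y2.
Qed.

Definition deg x := [set b in B | x \in b].

Lemma inj_bound (z : 'I_v) (Y : {set 'I_v}) (G : {set {set 'I_v}}) :
  z \notin Y -> G \subset B ->
  (forall b, b \in G -> (z \in b) && ~~ [disjoint b & Y]) -> #|G| <= #|Y|.
Proof.
move=> zY GB hG.
pose f b := odflt z [pick y in b :&: Y].
have fP b : b \in G -> f b \in b :&: Y.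
  move=> /hG /andP [_]; rewrite -setI_eq0 => /set0Pn [y hy].
  by rewrite /f; case: pickP => [w hw|/(_ y)]; rewrite ?hy.
have inj : {in G &, injective f}.
  move=> b1 b2 h1 h2 e.
  have := fP _ h1; have := fP _ h2; rewrite !inE e => /andP [y2 Y2] /andP [y1 _].
  apply: (@lin b1 b2 z (f b2)); rewrite ?(subsetP GB) //.
  - by apply: contraNneq zY => ->.
  - by case/andP: (hG _ h1).
  - by case/andP: (hG _ h2).
rewrite -(card_in_imset inj); apply: subset_leq_card; apply/subsetP => y /imsetP [b hb ->].
by have := fP _ hb; rewrite inE => /andP [].
Qed.

Lemma deg_bound (x : 'I_v) (A : {set 'I_v}) (G : {set {set 'I_v}}) :
  G \subset B -> (forall b, b \in G -> (x \in b) && (b \subset A)) ->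
  #|G| * k.-1 <= #|A| - 1.
Proof.
move=> GB hG.
case xA: (x \in A); last first.
  suff -> : #|G| = 0 by [].
  apply/eqP; rewrite cards_eq0; apply/eqP/setP => b; rewrite inE.
  apply/negbTE/negP => /hG /andP [xb /subsetP /(_ x xb)]; by rewrite xA.
have e1 : #|G| * k.-1 = \sum_(b in G) #|b :\ x|.
  rewrite -sum_nat_const; apply: eq_bigr => b hb.
  have /andP [xb _] := hG _ hb.
  by have := cardsD1 x b; rewrite xb (card_blk (b:=b)) ?(subsetP GB) // => ->.
have e2 : forall b, b \in G -> #|b :\ x| = \sum_(y in A :\ x) (y \in b).
  move=> b hb; have /andP [_ bA] := hG _ hb.
  rewrite -big_mkcondr /= sum1_card; apply: eq_card => y.
  rewrite !inE [in RHS]unfold_in /= ?inE; case: (y == x) => //=; case yb: (y \in b) => //=; rewrite ?andbF ?andbT //.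
  by rewrite (subsetP bA).
rewrite e1 (eq_bigr _ e2) exchange_big /=.
have : \sum_(y in A :\ x) \sum_(b in G) (y \in b) <= \sum_(y in A :\ x) 1.
  apply: leq_sum => y; rewrite !inE => /andP [nyx _].
  rewrite -big_mkcondr /= sum1_card; apply: eq_le1 => b1 b2.
  move=> /andP [h1 y1] /andP [h2 y2].
  have /andP [x1 _] := hG _ h1; have /andP [x2 _] := hG _ h2.
  by apply: (lin (subsetP GB _ h1) (subsetP GB _ h2) _ x1 y1 x2 y2); rewrite eq_sym.
move/leq_trans; apply; rewrite sum1_card.
by rewrite (cardsD1 x A) xA add1n subn1.
Qed.


Lemma heavy_int x C D : 2 * k < #|deg x| -> C \in B -> D \in B -> x \notin C -> x \notin D ->
  ~~ [disjoint C & D].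
Proof.
move=> hx hC hD xC xD; apply/negP => dCD.
have : #|deg x| <= #|C :|: D|.
  apply: (inj_bound (z:=x)); first by rewrite in_setU negb_or xC xD.
    by apply/subsetP => b; rewrite inE => /andP [].
  move=> b; rewrite inE => /andP [hb ->] /=; apply/negP => dis.
  apply: (HN3 hb hC hD) => //.
    apply: contraTT dis => /ndisjP [y y1 y2]; apply/ndisjP; exists y => //; by rewrite inE y2.
  apply: contraTT dis => /ndisjP [y y1 y2]; apply/ndisjP; exists y => //; by rewrite inE y2 orbT.
have := leq_card_setU C D; rewrite (card_blk hC) (card_blk hD) => -[h _] h2.
move: (leq_trans h2 h) hx; lia.
Qed.

Lemma cover_bound (S : {set {set 'I_v}}) (Cb : {set 'I_v}) (C : {set 'I_v})
  (G : 'I_v -> {set {set 'I_v}}) m :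
  S \subset Cb |: \bigcup_(p in C) (G p :\ Cb) ->
  (forall p, p \in C -> #|G p| <= m.+1) -> (forall p, p \in C -> Cb \in G p) ->
  #|S| <= 1 + #|C| * m.
Proof.
move=> hS hm hC; apply: leq_trans (subset_leq_card hS) _; rewrite cardsU1.
apply: leq_add; first by case: (_ \notin _).
apply: leq_trans (card_bigcup_le _ _) _; rewrite -sum_nat_const; apply: leq_sum => p hp.
by move: (hm p hp); rewrite (cardsD1 Cb (G p)) hC.
Qed.

Lemma IF (F : {set {set 'I_v}}) : F \subset B ->
  (forall b1 b2, b1 \in F -> b2 \in F -> ~~ [disjoint b1 & b2]) ->
  (exists p, F \subset deg p) \/ #|F| <= 1 + k * k.-1.
Proof.
move=> FB hF.
case: (boolP [exists p, F \subset deg p]) => [/existsP [p hp]|hn]; [by left; exists p | right].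
case: (set_0Vmem F) => [-> | [C hC]]; first by rewrite cards0.
have hD p : exists2 D, D \in F & p \notin D.
  move/existsPn: hn => /(_ p) /subsetPn [D hD]; rewrite inE (subsetP FB _ hD) /= => pD.
  by exists D.
rewrite -{1}(card_blk (subsetP FB _ hC)).
apply: (cover_bound (Cb := C) (G := fun p => F :&: deg p)).
- apply/subsetP => b hb; rewrite !inE; case: eqP => //= nbC.
  have [p pb pC] := ndisjP _ _ (hF _ _ hb hC).
  apply/bigcupP; exists p => //; rewrite !inE hb (subsetP FB _ hb) pb andbT.
  by rewrite andbT; apply/eqP.
- move=> p pC; have [D hD0 pD] := hD p.
  have k0 : 0 < k by lia.
  rewrite (prednK k0) -(card_blk (subsetP FB _ hD0)).
  apply: (inj_bound (z:=p)) => //; first by apply/subsetP => b; rewrite inE => /andP [/(subsetP FB)].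
  move=> b; rewrite !inE => /andP [bF /andP [_ ->]] /=; exact: hF.
- by move=> p pC; rewrite !inE hC (subsetP FB _ hC).
Qed.

Lemma upper r : v - 2 = r * k.-1 -> k * k - k + 2 <= r -> 2 <= v ->
  #|B| <= 2 * r + (k ^ 2 - 2).
Proof.
move=> hr hrk hv; rewrite -mulnn.
have k1 : 0 < k.-1 by lia.
have degT x : #|deg x| <= r.+1.
  have h : #|deg x| * k.-1 <= v - 1.
    have := @deg_bound x setT (deg x); rewrite cardsT card_ord; apply.
    - by apply/subsetP => b; rewrite inE => /andP [].
    - by move=> b; rewrite !inE => /andP [_ ->]; rewrite subsetT.
  rewrite -ltnS -(ltn_pmul2r k1); nia.
have kk : 4 <= k * k by nia.
case: (boolP [exists x, 2 * k < #|deg x|]) => [/existsP [x hx] | hnone].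
- case: (boolP [exists y, (y != x) && (2 * k < #|deg y|)]) => [/existsP [y /andP [nyx hy]] | hno].
  + have sub : B \subset deg x :|: deg y.
      apply/subsetP => b hb; rewrite !inE hb /=; apply/negPn/negP; rewrite negb_or => /andP [xb yb].
      have h1 : #|[set c in deg x | y \notin c]| <= #|b|.
        apply: (inj_bound (z:=x)) => //.
          by apply/subsetP => c; rewrite !inE => /andP [/andP [? _] _].
        move=> c; rewrite !inE => /andP [/andP [cB xc] yc]; rewrite xc /=.
        exact: (heavy_int hy cB hb yc yb).
      have h2 : #|[set c in deg x | y \in c]| <= 1.
        apply: eq_le1 => c1 c2; rewrite !inE => /andP [/andP [c1B xc1] yc1] /andP [/andP [c2B xc2] yc2].
        by apply: (lin c1B c2B _ xc1 yc1 xc2 yc2); rewrite eq_sym.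
      have h3 : #|deg x| <= #|[set c in deg x | y \notin c]| + #|[set c in deg x | y \in c]|.
        apply: leq_trans (leq_card_setU _ _).1; apply: subset_leq_card; apply/subsetP => c hc.
        move: hc; rewrite !inE => /andP [cB xc]; rewrite cB xc /=; by case: (y \in c).
      rewrite (card_blk hb) in h1; move: hx h1 h2 h3; lia.
    apply: leq_trans (subset_leq_card sub) _; apply: leq_trans (leq_card_setU _ _).1 _.
    have := degT x; have := degT y; lia.
  + set Fx := [set b in B | x \notin b].
    have sub : B \subset deg x :|: Fx.
      by apply/subsetP => b hb; rewrite !inE hb /=; case: (x \in b).
    have hFx : #|Fx| <= maxn (2 * k) (1 + k * k.-1).
      have := @IF Fx _ _; case.
      * by apply/subsetP => b; rewrite inE => /andP [].
      * move=> b1 b2; rewrite !inE => /andP [b1B xb1] /andP [b2B xb2].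
        exact: heavy_int hx b1B b2B xb1 xb2.
      * move=> [p hp]; case: (eqVneq p x) => [epx | npx].
          suff -> : Fx = set0 by rewrite cards0.
          apply/eqP; rewrite -subset0; apply/subsetP => b hb.
          have := subsetP hp b hb; rewrite !inE epx => /andP [_ xb].
          by move: hb; rewrite !inE xb andbF.
        have : ~~ (2 * k < #|deg p|) by move/existsPn: hno => /(_ p); rewrite npx.
        rewrite -leqNgt => hp2; apply: leq_trans (subset_leq_card hp) _.
        exact: leq_trans hp2 (leq_maxl _ _).
      * by move=> h; apply: leq_trans h (leq_maxr _ _).
    apply: leq_trans (subset_leq_card sub) _; apply: leq_trans (leq_card_setU _ _).1 _.
    have := degT x; move: hFx hrk; nia.
- have hp p : #|deg p| <= 2 * k by move/existsPn: hnone => /(_ p); rewrite -leqNgt.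
  case: (set_0Vmem B) => [-> | [C hC]]; first by rewrite cards0.
  set S := [set b in B | ~~ [disjoint b & C]]; set FC := [set b in B | [disjoint b & C]].
  have sub : B \subset S :|: FC.
    by apply/subsetP => b hb; rewrite !inE hb /=; case: [disjoint b & C].
  have hS : #|S| <= 1 + k * (2 * k).-1.
    rewrite -{1}(card_blk hC); apply: (cover_bound (Cb:=C) (G:=deg)).
    + apply/subsetP => b; rewrite inE => /andP [hb nd]; rewrite !inE; case: eqP => //= nbC.
      have [p pb pC] := ndisjP _ _ nd; apply/bigcupP; exists p => //.
      by rewrite !inE hb pb /= andbT; apply/eqP.
    + by move=> p _; rewrite prednK ?hp //; lia.
    + by move=> p pC; rewrite inE hC.
  have hFC : (exists p, FC \subset deg p) \/ #|FC| <= 1 + k * k.-1.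
    apply: IF; first by apply/subsetP => b; rewrite inE => /andP [].
    move=> b1 b2; rewrite !inE => /andP [b1B d1] /andP [b2B d2].
    by apply/negP => d12; apply: (HN3 b1B b2B hC d12 d1 d2).
  apply: leq_trans (subset_leq_card sub) _; apply: leq_trans (leq_card_setU _ _).1 _.
  case: hFC => [[p hpp]|hFC]; last by move: hS hFC hrk; nia.
  have h1 : #|FC| <= 2 * k := leq_trans (subset_leq_card hpp) (hp p).
  have h2 : #|FC| * k.-1 <= #|~: C| - 1.
    apply: (@deg_bound p); first by apply/subsetP => b; rewrite inE => /andP [].
    move=> b hb; move/subsetP: hpp => /(_ b hb); rewrite inE => /andP [_ ->] /=.
    by move: hb; rewrite inE -disjoints_subset => /andP [].
  have := cardsC C; rewrite card_ord (card_blk hC) => eC.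
  case: (ltnP 2 k) => k3.
    move: hS h1 hrk k3; nia.
  have ek : k = 2 by lia.
  move: hS h1 h2 hrk eC hr; rewrite ek /=; lia.
Qed.

End Upper.

Lemma noppc3 v k (B : {set {set 'I_v}}) : 0 < k -> is_packing k B -> max_ppc_size B 2 ->
  forall b1 b2 b3, b1 \in B -> b2 \in B -> b3 \in B ->
  [disjoint b1 & b2] -> [disjoint b1 & b3] -> [disjoint b2 & b3] -> False.
Proof.
move=> k0 hP /andP [_ /existsPn hM] b1 b2 b3 h1 h2 h3 d12 d13 d23.
have ne (c1 c2 : {set 'I_v}) : c1 \in B -> [disjoint c1 & c2] -> c1 != c2.
  move=> hc dc; apply/eqP => e; move: dc; rewrite -e.
  have : 0 < #|c1| by rewrite (card_blk hP hc).
  case/card_gt0P => x hx /disjointFr /(_ hx); by rewrite hx.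
apply: (negP (hM [set b1; b2; b3])); apply/andP; split; last first.
  apply/eqP; rewrite setUC cardsU1 !inE cards2 (ne _ _ h1 d12).
  rewrite -disjoint_sym in d13; rewrite -disjoint_sym in d23.
  by rewrite negb_or (ne _ _ h3 d13) (ne _ _ h3 d23).
apply/andP; split.
  by apply/subsetP => c; rewrite !inE => /orP [/orP [] | ] /eqP ->.
have ds c1 c2 : c1 \in [set b1; b2; b3] -> c2 \in [set b1; b2; b3] -> c1 != c2 -> [disjoint c1 & c2].
  rewrite !inE => /orP [/orP [] | ] /eqP -> /orP [/orP [] | ] /eqP ->; rewrite ?eqxx //;
  by rewrite ?d12 ?d13 ?d23 // disjoint_sym ?d12 ?d13 ?d23.
by apply/forall_inP => c1 hc1; apply/forall_inP => c2 hc2; apply/implyP; apply: ds.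
Qed.

Lemma ppc_le2 v (B P : {set {set 'I_v}}) a b :
  (forall c, c \in B -> (a \in c) || (b \in c)) -> is_ppc B P -> #|P| <= 2.
Proof.
move=> hab /andP [PB /forall_inP hd].
have le1 z : #|[set c in P | z \in c]| <= 1.
  apply: eq_le1 => c1 c2; rewrite !inE => /andP [p1 z1] /andP [p2 z2].
  apply/eqP; apply/negP => /negP n12.
  have := implyP (forall_inP (hd _ p1) _ p2) n12.
  by move/disjointFr/(_ z1); rewrite z2.
apply: leq_trans (_ : #|[set c in P | a \in c] :|: [set c in P | b \in c]| <= 2).
  apply: subset_leq_card; apply/subsetP => c hc; rewrite !inE hc /=.
  exact: hab (subsetP PB _ hc).
apply: leq_trans (leq_card_setU _ _).1 _.
exact: leq_add (le1 a) (le1 b).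
Qed.

Section Lower.
Variables (v k r : nat).
Hypothesis Hk : 2 <= k.
Hypothesis hr : v - 2 = r * k.-1.
Hypothesis hrk : k <= r.
Hypothesis hv : 2 <= v.

Let n := k.-1.
Let n0 : 0 < n. Proof. rewrite /n; lia. Qed.
Let nr : n < r. Proof. rewrite /n; lia. Qed.
Let a : 'I_v := Ordinal (leq_trans (isT : 0 < 2) hv).
Let b : 'I_v := Ordinal (leq_trans (isT : 1 < 2) hv).

Definition pt (i : nat) : 'I_v := insubd a i.
Definition f q j := pt (2 + q * n + j).

Lemma valf q j : q < r -> j < n -> val (f q j) = 2 + q * n + j.
Proof.
move=> hq hj; rewrite /f /pt val_insubd.
suff -> : 2 + q * n + j < v by [].
have : q * n + j < r * n.
  apply: (@leq_trans (q.+1 * n)); first by rewrite mulSn; lia.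
  by rewrite leq_mul2r hq orbT.
rewrite /n; lia.
Qed.

Lemma f_inj q j q' j' : q < r -> j < n -> q' < r -> j' < n -> f q j = f q' j' ->
  q = q' /\ j = j'.
Proof.
move=> hq hj hq' hj' /(congr1 val); rewrite !valf // => e.
have e2 : q * n + j = q' * n + j' by lia.
split.
  by have := congr1 (divn^~ n) e2; rewrite /= !divnMDl // !divn_small // !addn0.
by have := congr1 (modn^~ n) e2; rewrite /= !modnMDl !modn_small.
Qed.

Lemma f_a q j : q < r -> j < n -> (f q j != a) && (f q j != b).
Proof.
move=> hq hj; apply/andP; split; apply/eqP => /(congr1 val); rewrite valf //=; lia.
Qed.

Definition G q := a |: [set f q j | j : 'I_n].
Definition H l := b |: [set f ((l + j) %% r) j | j : 'I_n].

Lemma r0 : 0 < r. Proof. lia. Qed.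

Lemma memG q x : x \in G q -> x = a \/ exists2 j, j < n & x = f q j.
Proof.
rewrite /G !inE => /orP [/eqP -> | /imsetP [j _ ->]]; [by left | right].
by exists j.
Qed.

Lemma memH l x : x \in H l -> x = b \/ exists2 j, j < n & x = f ((l + j) %% r) j.
Proof.
rewrite /H !inE => /orP [/eqP -> | /imsetP [j _ ->]]; [by left | right].
by exists j.
Qed.

Lemma aG q : a \in G q. Proof. by rewrite /G !inE eqxx. Qed.
Lemma bH l : b \in H l. Proof. by rewrite /H !inE eqxx. Qed.

Lemma bG q : q < r -> b \notin G q.
Proof.
move=> hq; apply/negP => /memG [/(congr1 val) //| [j hj e]].
by have := f_a hq hj; rewrite -e eqxx andbF.
Qed.

Lemma aH l : a \notin H l.
Proof.
apply/negP => /memH [/(congr1 val) //| [j hj e]].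
have := @f_a ((l + j) %% r) j (ltn_pmod _ r0) hj; by rewrite -e eqxx.
Qed.

Lemma fG q j (hj : j < n) : f q j \in G q.
Proof. by rewrite /G !inE; apply/orP; right; apply/imsetP; exists (Ordinal hj). Qed.

Lemma fH l j (hj : j < n) : f ((l + j) %% r) j \in H l.
Proof. by rewrite /H !inE; apply/orP; right; apply/imsetP; exists (Ordinal hj). Qed.

Lemma modeq l j1 j2 : j1 < r -> j2 < r -> (l + j1) %% r = (l + j2) %% r -> j1 = j2.
Proof. by move=> h1 h2 /eqP; rewrite eqn_modDl !modn_small // => /eqP. Qed.

Lemma cardG q : q < r -> #|G q| = k.
Proof.
move=> hq; rewrite /G cardsU1 card_imset ?card_ord.
  have -> : a \notin [set f q j | j : 'I_n].
    apply/negP => /imsetP [j _ e]; have := @f_a q j hq (ltn_ord j); by rewrite -e eqxx.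
  rewrite /n; lia.
move=> j1 j2 e; apply: val_inj; exact: (f_inj hq (ltn_ord j1) hq (ltn_ord j2) e).2.
Qed.

Lemma cardH l : #|H l| = k.
Proof.
rewrite /H cardsU1 card_imset ?card_ord.
  have -> : b \notin [set f ((l + j) %% r) j | j : 'I_n].
    apply/negP => /imsetP [j _ e].
    have := @f_a ((l + j) %% r) j (ltn_pmod _ r0) (ltn_ord j); by rewrite -e eqxx andbF.
  rewrite /n; lia.
move=> j1 j2 e; apply: val_inj.
exact: (f_inj (ltn_pmod _ r0) (ltn_ord j1) (ltn_pmod _ r0) (ltn_ord j2) e).2.
Qed.

Definition Bc := [set G q | q : 'I_r] :|: [set H l | l : 'I_r].

Lemma memBc c : c \in Bc -> (exists2 q, q < r & c = G q) \/ (exists2 l, l < r & c = H l).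
Proof.
rewrite /Bc inE => /orP [/imsetP [q _ ->] | /imsetP [l _ ->]]; [left | right];
  by eexists; first exact: ltn_ord.
Qed.

Lemma GG q1 q2 x y : q1 < r -> q2 < r -> x != y -> x \in G q1 -> y \in G q1 ->
  x \in G q2 -> y \in G q2 -> q1 = q2.
Proof.
move=> h1 h2 nxy x1 y1 x2 y2.
have [z [z1 z2 za]] : exists z, [/\ z \in G q1, z \in G q2 & z != a].
  case: (eqVneq x a) => [exa|xa]; last by exists x.
  by exists y; split => //; apply: contraNneq nxy => ->; rewrite exa.
case: (memG z1) => [eza|[j1 hj1 e1]]; first by rewrite eza eqxx in za.
case: (memG z2) => [eza|[j2 hj2 e2]]; first by rewrite eza eqxx in za.
by have [] := f_inj h1 hj1 h2 hj2 (etrans (esym e1) e2).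
Qed.

Lemma HH l1 l2 x y : l1 < r -> l2 < r -> x != y -> x \in H l1 -> y \in H l1 ->
  x \in H l2 -> y \in H l2 -> l1 = l2.
Proof.
move=> h1 h2 nxy x1 y1 x2 y2.
have [z [z1 z2 za]] : exists z, [/\ z \in H l1, z \in H l2 & z != b].
  case: (eqVneq x b) => [exa|xa]; last by exists x.
  by exists y; split => //; apply: contraNneq nxy => ->; rewrite exa.
case: (memH z1) => [eza|[j1 hj1 e1]]; first by rewrite eza eqxx in za.
case: (memH z2) => [eza|[j2 hj2 e2]]; first by rewrite eza eqxx in za.
have [e3 e4] := f_inj (ltn_pmod _ r0) hj1 (ltn_pmod _ r0) hj2 (etrans (esym e1) e2).
rewrite -e4 [l1 + _]addnC [l2 + _]addnC in e3.
exact: modeq e3.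
Qed.

Lemma GH q l x y : q < r -> x != y -> x \in G q -> y \in G q ->
  x \in H l -> y \in H l -> False.
Proof.
move=> hq nxy x1 y1 x2 y2.
have dec z : z \in G q -> z \in H l -> exists2 j, j < n & (z = f q j /\ q = (l + j) %% r).
  move=> zG zH.
  case: (memG zG) => [eza|[j1 hj1 e1]]; first by move: zH; rewrite eza (negbTE (aH l)).
  case: (memH zH) => [ezb|[j2 hj2 e2]]; first by move: zG; rewrite ezb (negbTE (bG hq)).
  have [e3 e4] := f_inj hq hj1 (ltn_pmod _ r0) hj2 (etrans (esym e1) e2).
  by exists j1 => //; split => //; rewrite e4.
have [j1 hj1 [ex q1]] := dec _ x1 x2; have [j2 hj2 [ey q2]] := dec _ y1 y2.
have ej : j1 = j2 by apply: (modeq (l := l)); rewrite -?q1 -?q2 //; lia.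
by move: nxy; rewrite ex ey ej eqxx.
Qed.

Lemma Bc_pack : is_packing k Bc.
Proof.
apply/andP; split.
  apply/forall_inP => c hc; case: (memBc hc) => [[q hq ->]|[l hl ->]]; by rewrite ?cardG ?cardH.
apply/forallP => x; apply/forallP => y; apply/implyP => nxy.
apply: eq_le1 => c1 c2 hc1 hc2.
have /andP [hb1 /andP [x1 y1]] : (c1 \in Bc) && ((x \in c1) && (y \in c1)) by move: hc1; rewrite !inE.
have /andP [hb2 /andP [x2 y2]] : (c2 \in Bc) && ((x \in c2) && (y \in c2)) by move: hc2; rewrite !inE.
have h1 := memBc hb1; have h2 := memBc hb2.
case: h1 => [[q1 hq1 e1]|[l1 hl1 e1]]; case: h2 => [[q2 hq2 e2]|[l2 hl2 e2]]; subst c1 c2.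
- by rewrite (GG hq1 hq2 nxy x1 y1 x2 y2).
- by case: (GH hq1 nxy x1 y1 x2 y2).
- by case: (GH hq2 nxy x2 y2 x1 y1).
- by rewrite (HH hl1 hl2 nxy x1 y1 x2 y2).
Qed.

Lemma Bc_ab c : c \in Bc -> (a \in c) || (b \in c).
Proof. by case/memBc => [[q _ ->]|[l _ ->]]; rewrite ?aG ?bH ?orbT. Qed.

Lemma disjG0H1 : [disjoint G 0 & H 1].
Proof.
apply/negPn/negP => /ndisjP [z zG zH].
have h0 : 0 < r := r0.
case: (memG zG) => [eza|[j1 hj1 e1]]; first by move: zH; rewrite eza (negbTE (aH 1)).
case: (memH zH) => [ezb|[j2 hj2 e2]]; first by move: zG; rewrite ezb (negbTE (bG h0)).
have [e3 e4] := f_inj h0 hj1 (ltn_pmod _ r0) hj2 (etrans (esym e1) e2).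
move: e3; rewrite modn_small; first by [].
rewrite /n in hj2; lia.
Qed.

Lemma Bc_ppc : max_ppc_size Bc 2.
Proof.
apply/andP; split.
  apply/existsP; exists [set G 0; H 1]; apply/andP; split; last first.
    rewrite cards2; suff -> : G 0 != H 1 by [].
    by apply/negP => /eqP e; move: (aG 0); rewrite e (negbTE (aH 1)).
  apply/andP; split.
    apply/subsetP => c; rewrite !inE => /orP [] /eqP ->; apply/orP; [left|right];
      apply/imsetP; [exists (Ordinal r0) | exists (Ordinal (leq_trans (isT : 1 < 2) (leq_trans Hk hrk)))] => //.
  apply/forall_inP => c1; rewrite !inE => h1; apply/forall_inP => c2; rewrite !inE => h2.
  apply/implyP; case/orP: h1 => /eqP ->; case/orP: h2 => /eqP ->; rewrite ?eqxx //.
    by rewrite disjG0H1.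
  by rewrite disjoint_sym disjG0H1.
apply/negP => /existsP [P /andP [hP /eqP c3]].
by have := ppc_le2 Bc_ab hP; rewrite c3.
Qed.

Lemma cardBc : #|Bc| = 2 * r.
Proof.
rewrite /Bc cardsU.
have -> : [set G q | q : 'I_r] :&: [set H l | l : 'I_r] = set0.
  apply/eqP; rewrite -subset0; apply/subsetP => c; rewrite !inE => /andP [/imsetP [q _ ->] /imsetP [l _ e]].
  by move: (aG q); rewrite e (negbTE (aH l)).
rewrite cards0 subn0 !card_imset ?card_ord; first by lia.
  move=> l1 l2 e; apply: val_inj.
  have := fH (val l1) n0; rewrite e => /memH [/(congr1 val)|[j hj ej]].
    by rewrite valf // ?ltn_pmod ?r0 //.
  have [e3 e4] := f_inj (ltn_pmod _ r0) n0 (ltn_pmod _ r0) hj ej.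
  by rewrite -e4 !addn0 !modn_small ?ltn_ord in e3.
move=> q1 q2 e; apply: val_inj.
have := fG (val q1) n0; rewrite e => /memG [/(congr1 val)|[j hj ej]].
  by rewrite valf // ?ltn_ord.
by have [] := f_inj (ltn_ord q1) n0 (ltn_ord q2) hj ej.
Qed.

Lemma lower : 2 * r <= beta 2 v k.
Proof.
rewrite -cardBc /beta.
by apply: (leq_bigmax_cond (P := fun B => is_packing k B && max_ppc_size B 2) (F := fun B => #|B|)); rewrite Bc_pack Bc_ppc.
Qed.

End Lower.

Theorem theorem5p6 (k v : nat) :
  2 <= k ->
  v = 2 %[mod k.-1] ->
  k * (k.-1)^2 + 2 * k <= v ->
  (2 * v - 4) %/ k.-1 <= beta 2 v k <= (2 * v - 4) %/ k.-1 + (k ^ 2 - 2).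
Proof.
move=> Hk hmod hv.
have h2k : 2 * k <= v by apply: leq_trans hv; apply: leq_addl.
have hv2 : 2 <= v by lia.
have k1 : 0 < k.-1 by lia.
have dv : k.-1 %| v - 2 by rewrite -(eqn_mod_dvd _ hv2); apply/eqP.
set r := (v - 2) %/ k.-1.
have hr : v - 2 = r * k.-1 by rewrite divnK.
have e2 : (2 * v - 4) %/ k.-1 = 2 * r.
  have -> : 2 * v - 4 = (2 * r) * k.-1 by rewrite -mulnA -hr; lia.
  by rewrite mulnK.
have ek : k = k.-1.+1 by lia.
move: hv hr k1 hmod dv e2; rewrite ek; move: k.-1 => m hv hr k1 _ _ e2 {ek Hk h2k}.
rewrite /= in hv hr k1 e2 *.
have hrk : m.+1 * m + 2 <= r.
  rewrite -(leq_pmul2r k1) -hr mulnDl -mulnA mulnn.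
  move: hv; lia.
have hkr : m.+1 <= r.
  apply: leq_trans hrk; apply: leq_trans (leq_addr _ _); exact: leq_pmulr.
rewrite e2; apply/andP; split.
  exact: (@lower v m.+1 r k1 hr hkr hv2).
rewrite /beta; apply/bigmax_leqP => B /andP [hP hM].
apply: (@upper v m.+1 B k1 hP _ r hr _ hv2).
  exact: (@noppc3 v m.+1 B isT hP hM).
have -> : m.+1 * m.+1 - m.+1 = m.+1 * m by rewrite mulnS addKn.
exact: hrk.
Qed.
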